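(* $E^{ce}_{\max}$ is not binarily reducible to $E^{ce}_{\min}$ (i.e. $E^{ce}_{\max}\not\leq_c^2E^{ce}_{\min}$). However, $E^{ce}_{\min}$ is finitarily reducible to $E^{ce}_{\max}$ (i.e. $E^{ce}_{\min}\leq_c^{<\omega}E^{ce}_{\max}$).
   Context: $W_e$ is the $e$-th c.e. set. $i\,E^{ce}_{\min}\,j\iff\min(W_i)=\min(W_j)$ and $i\,E^{ce}_{\max}\,j\iff\max(W_i)=\max(W_j)$, where the empty set has minimum $+\infty$ and maximum $-\infty$, and all infinite sets have maximum $+\infty$. For equivalence relations $E,F$ on $\omega$ and $n\ge1$, $E\leq_c^nF$ means there is a total computable function mapping each $(x_0,\dots,x_{n-1})\in\omega^n$ to $(y_0,\dots,y_{n-1})\in\omega^n$ with $x_i\,E\,x_j\iff y_i\,F\,y_j$ for all $i<j<n$; $E\leq_c^{<\omega}F$ means such functions exist uniformly in $n$ (one computable function taking $n$ and an $n$-tuple). *)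

(* Defs.v *)
From Stdlib Require Import Arith List.
Import ListNotations.

Inductive prog : Type :=
| pzero : prog
| psucc : prog
| pproj : nat -> prog
| pcomp : prog -> list prog -> prog
| prec  : prog -> prog -> prog
| pmu   : prog -> prog.

Inductive eval : prog -> list nat -> nat -> Prop :=
| ev_zero : forall v, eval pzero v 0
| ev_succ : forall x v, eval psucc (x :: v) (S x)
| ev_proj : forall i v, i < length v -> eval (pproj i) v (nth i v 0)
| ev_comp : forall f gs v ys y,
    evals gs v ys -> eval f ys y -> eval (pcomp f gs) v y
| ev_rec0 : forall f g v y, eval f v y -> eval (prec f g) (0 :: v) y
| ev_recS : forall f g n v y z,
    eval (prec f g) (n :: v) y -> eval g (n :: y :: v) z ->
    eval (prec f g) (S n :: v) z
| ev_mu : forall f v n,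
    eval f (n :: v) 0 ->
    (forall m, m < n -> exists k, eval f (m :: v) (S k)) ->
    eval (pmu f) v n
with evals : list prog -> list nat -> list nat -> Prop :=
| evs_nil : forall v, evals [] v []
| evs_cons : forall g gs v y ys,
    eval g v y -> evals gs v ys -> evals (g :: gs) v (y :: ys).

Definition cpair (x y : nat) : nat := (x + y) * (x + y + 1) / 2 + y.

Fixpoint code (p : prog) : nat :=
  match p with
  | pzero => cpair 0 0
  | psucc => cpair 1 0
  | pproj i => cpair 2 i
  | pcomp f gs =>
      cpair 3 (cpair (code f)
        ((fix cl (l : list prog) : nat :=
            match l with
            | [] => 0
            | g :: l' => S (cpair (code g) (cl l'))
            end) gs))
  | prec f g => cpair 4 (cpair (code f) (code g))
  | pmu f => cpair 5 (code f)
  end.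

Fixpoint code_nats (l : list nat) : nat :=
  match l with
  | [] => 0
  | x :: l' => S (cpair x (code_nats l'))
  end.

(* W_e : the e-th c.e. set = domain of the unary program with code e
   (empty if e codes no program). *)
Definition W (e x : nat) : Prop :=
  exists p, code p = e /\ exists y, eval p [x] y.

Inductive ext : Type := MInf | Fin (n : nat) | PInf.

Definition minW (e : nat) (v : ext) : Prop :=
  match v with
  | Fin m => W e m /\ forall k, W e k -> m <= k
  | PInf => forall k, ~ W e k
  | MInf => False
  end.

Definition maxW (e : nat) (v : ext) : Prop :=
  match v with
  | Fin m => W e m /\ forall k, W e k -> k <= m
  | PInf => forall n, exists k, n <= k /\ W e k
  | MInf => forall k, ~ W e k
  end.

Definition E_min (i j : nat) : Prop := exists v, minW i v /\ minW j v.
Definition E_max (i j : nat) : Prop := exists v, maxW i v /\ maxW j v.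

Definition computable2 (f : nat -> nat -> nat) : Prop :=
  exists p, forall x y, eval p [x; y] (f x y).

Definition red2 (E F : nat -> nat -> Prop) : Prop :=
  exists f g : nat -> nat -> nat,
    computable2 f /\ computable2 g /\
    forall x0 x1, E x0 x1 <-> F (f x0 x1) (g x0 x1).

(* E <=_c^{<omega} F : one total computable function which, given any
   n-tuple (a list of length n, coded as a number), returns an n-tuple
   reducing E to F on all pairs of coordinates. *)
Definition red_fin (E F : nat -> nat -> Prop) : Prop :=
  exists G : list nat -> list nat,
    (exists p, forall l, eval p [code_nats l] (code_nats (G l))) /\
    forall l, length (G l) = length l /\
      forall i j, i < j -> j < length l ->
        (E (nth i l 0) (nth j l 0) <-> F (nth i (G l) 0) (nth j (G l) 0)).

(* Main.v *)
Require Import Defs.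
From Stdlib Require Import Arith List Lia Bool Classical.
Import ListNotations.

Lemma eval_det : forall p v y, eval p v y -> forall y', eval p v y' -> y = y'
with evals_det : forall gs v ys, evals gs v ys -> forall ys', evals gs v ys' -> ys = ys'.
Proof.
  - intros p v y H; destruct H; intros y' H'.
    + inversion H'; auto.
    + inversion H'; auto.
    + inversion H'; auto.
    + inversion H'; subst.
      assert (ys = ys0) by (eapply evals_det; eauto). subst.
      eapply eval_det; eauto.
    + inversion H'; subst. eapply eval_det; eauto.
    + inversion H'; subst.
      assert (y = y0) by (eapply eval_det; eauto). subst.
      eapply eval_det; eauto.
    + inversion H' as [| | | | | |f' v' n' Hz Hall]; subst.
      destruct (lt_eq_lt_dec n y') as [[Hl|He]|Hl]; auto.
      * destruct (Hall n Hl) as [k Hk].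
        pose proof (eval_det _ _ _ H _ Hk). discriminate.
      * destruct (H0 y' Hl) as [k Hk].
        pose proof (eval_det _ _ _ Hk _ Hz). discriminate.
  - intros gs v ys H; destruct H; intros ys' H'.
    + inversion H'; auto.
    + inversion H'; subst.
      f_equal; [eapply eval_det|eapply evals_det]; eauto.
Qed.

Fixpoint tri (n : nat) : nat := match n with 0 => 0 | S k => tri k + S k end.

Lemma tri2 : forall n, 2 * tri n = n * (n + 1).
Proof. induction n; simpl tri; nia. Qed.

Lemma cpair_tri : forall x y, cpair x y = tri (x + y) + y.
Proof.
  intros x y. unfold cpair. f_equal.
  rewrite <- tri2. rewrite Nat.mul_comm. apply Nat.div_mul. lia.
Qed.

Lemma tri_mono : forall a b, a <= b -> tri a <= tri b.
Proof. induction 1; simpl; lia. Qed.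

Lemma cpair_inj : forall x y x' y', cpair x y = cpair x' y' -> x = x' /\ y = y'.
Proof.
  intros x y x' y'. rewrite !cpair_tri. intros H.
  assert (x + y = x' + y').
  { destruct (lt_eq_lt_dec (x+y) (x'+y')) as [[Hl|He]|Hl]; auto.
    - pose proof (tri_mono (S (x+y)) (x'+y') Hl). simpl in H0. lia.
    - pose proof (tri_mono (S (x'+y')) (x+y) Hl). simpl in H0. lia. }
  rewrite H0 in H. lia.
Qed.

Lemma cpair_ge : forall x y, x <= cpair x y /\ y <= cpair x y.
Proof.
  intros. rewrite cpair_tri. assert (x + y <= tri (x+y)).
  { induction (x+y); simpl; lia. }
  lia.
Qed.

Lemma cpair_surj : forall n, exists x y, cpair x y = n.
Proof.
  induction n.
  - exists 0, 0. reflexivity.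
  - destruct IHn as [x [y H]]. destruct x.
    + exists (S y), 0. rewrite cpair_tri in *. rewrite Nat.add_0_r. simpl tri. simpl in H. rewrite Nat.add_0_r. lia.
    + exists x, (S y). rewrite cpair_tri in *. replace (x + S y) with (S x + y) by lia. lia.
Qed.

Fixpoint codel (l : list prog) : nat :=
  match l with [] => 0 | g :: l' => S (cpair (code g) (codel l')) end.

Lemma code_comp : forall f gs, code (pcomp f gs) = cpair 3 (cpair (code f) (codel gs)).
Proof.
  intros. reflexivity.
Qed.

Lemma code_inj : forall p q, code p = code q -> p = q.
Proof.
  fix IH 1. intros p q H. destruct p, q;
  try rewrite !code_comp in H; try rewrite code_comp in H; simpl in H;
  try (apply cpair_inj in H; destruct H as [H1 H2]; discriminate H1).
  - reflexivity.
  - reflexivity.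
  - apply cpair_inj in H as [_ H]. subst. reflexivity.
  - apply cpair_inj in H as [_ H]. apply cpair_inj in H as [H1 H2].
    apply IH in H1. subst. f_equal.
    revert l0 H2. induction l; destruct l0; simpl; intros H; try discriminate; auto.
    injection H; intros H'. apply cpair_inj in H' as [Ha Hb].
    apply IH in Ha; subst. f_equal. auto.
  - apply cpair_inj in H as [_ H]. apply cpair_inj in H as [H1 H2].
    apply IH in H1. apply IH in H2. subst. reflexivity.
  - apply cpair_inj in H as [_ H]. apply IH in H. subst. reflexivity.
Qed.

Lemma codel_inj : forall l l', codel l = codel l' -> l = l'.
Proof.
  induction l; destruct l'; simpl; intros H; try discriminate; auto.
  injection H; intros H'. apply cpair_inj in H' as [Ha Hb].
  apply code_inj in Ha; subst. f_equal. auto.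
Qed.

Lemma code_nats_inj : forall l l', code_nats l = code_nats l' -> l = l'.
Proof.
  induction l; destruct l'; simpl; intros H; try discriminate; auto.
  injection H; intros H'. apply cpair_inj in H' as [Ha Hb]. subst. f_equal. auto.
Qed.

Lemma code_nats_surj : forall n, exists l, code_nats l = n.
Proof.
  intro n. induction n as [n IH] using (well_founded_induction lt_wf).
  destruct n. - exists []. reflexivity.
  - destruct (cpair_surj n) as [x [y H]].
    destruct (IH y) as [l Hl]. pose proof (cpair_ge x y). lia.
    exists (x :: l). simpl. rewrite Hl, H. reflexivity.
Qed.

Definition Comp (n : nat) (f : list nat -> nat) : Prop :=
  exists p, forall v, length v = n -> eval p v (f v).

Lemma comp_ext : forall n f g, Comp n f -> (forall v, length v = n -> f v = g v) -> Comp n g.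
Proof. intros n f g [p Hp] H. exists p. intros v Hv. rewrite <- H; auto. Qed.

Lemma C_proj : forall n i, i < n -> Comp n (fun v => nth i v 0).
Proof. intros n i H. exists (pproj i). intros v Hv. constructor. lia. Qed.

Fixpoint constp (k : nat) : prog :=
  match k with 0 => pzero | S k' => pcomp psucc [constp k'] end.

Lemma constp_eval : forall k v, eval (constp k) v k.
Proof.
  induction k; simpl; intros v.
  - constructor.
  - econstructor. econstructor. apply IHk. constructor. constructor.
Qed.

Lemma C_const : forall n k, Comp n (fun _ => k).
Proof. intros. exists (constp k). intros. apply constp_eval. Qed.

Lemma C_succ : forall n a, Comp n a -> Comp n (fun v => S (a v)).
Proof.
  intros n a [p Hp]. exists (pcomp psucc [p]). intros v Hv.
  econstructor. econstructor. apply Hp; auto. constructor. constructor.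
Qed.

Lemma C_compose : forall n m g fs, Comp m g -> Forall (Comp n) fs -> length fs = m ->
  Comp n (fun v => g (map (fun h => h v) fs)).
Proof.
  intros n m g fs [pg Hg] Hf Hl.
  assert (exists ps, forall v, length v = n -> evals ps v (map (fun h => h v) fs)) as [ps Hps].
  { clear Hl. induction Hf.
    - exists []. intros. constructor.
    - destruct H as [p Hp]. destruct IHHf as [ps Hps].
      exists (p :: ps). intros. simpl. constructor; auto. }
  exists (pcomp pg ps). intros v Hv. econstructor. apply Hps; auto.
  apply Hg. rewrite length_map. auto.
Qed.

Class C1 (g : nat -> nat) := c1 : Comp 1 (fun u => g (nth 0 u 0)).
Class C2 (g : nat -> nat -> nat) := c2 : Comp 2 (fun u => g (nth 0 u 0) (nth 1 u 0)).
Class C3 (g : nat -> nat -> nat -> nat) :=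
  c3 : Comp 3 (fun u => g (nth 0 u 0) (nth 1 u 0) (nth 2 u 0)).
Class C4 (g : nat -> nat -> nat -> nat -> nat) :=
  c4 : Comp 4 (fun u => g (nth 0 u 0) (nth 1 u 0) (nth 2 u 0) (nth 3 u 0)).

Lemma C_app1 : forall g n a, C1 g -> Comp n a -> Comp n (fun v => g (a v)).
Proof.
  intros. eapply comp_ext. apply (C_compose n 1 (fun u => g (nth 0 u 0)) [a]); repeat constructor; auto.
  intros; reflexivity.
Qed.
Lemma C_app2 : forall g n a b, C2 g -> Comp n a -> Comp n b -> Comp n (fun v => g (a v) (b v)).
Proof.
  intros. eapply comp_ext. apply (C_compose n 2 (fun u => g (nth 0 u 0) (nth 1 u 0)) [a;b]); repeat constructor; auto.
  intros; reflexivity.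
Qed.
Lemma C_app3 : forall g n a b c, C3 g -> Comp n a -> Comp n b -> Comp n c ->
  Comp n (fun v => g (a v) (b v) (c v)).
Proof.
  intros. eapply comp_ext. apply (C_compose n 3 (fun u => g (nth 0 u 0) (nth 1 u 0) (nth 2 u 0)) [a;b;c]); repeat constructor; auto.
  intros; reflexivity.
Qed.
Lemma C_app4 : forall g n a b c d, C4 g -> Comp n a -> Comp n b -> Comp n c -> Comp n d ->
  Comp n (fun v => g (a v) (b v) (c v) (d v)).
Proof.
  intros. eapply comp_ext. apply (C_compose n 4 (fun u => g (nth 0 u 0) (nth 1 u 0) (nth 2 u 0) (nth 3 u 0)) [a;b;c;d]); repeat constructor; auto.
  intros; reflexivity.
Qed.

Fixpoint iterk (st : nat -> nat -> nat) (b : nat) (k : nat) : nat :=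
  match k with 0 => b | S k' => st k' (iterk st b k') end.

Lemma map_nth_seq_gen : forall v s, map (fun i => nth i (s ++ v) 0) (seq (length s) (length v)) = v.
Proof.
  induction v as [|x v IH]; intros s. reflexivity.
  simpl. rewrite app_nth2 by lia. rewrite Nat.sub_diag. simpl. f_equal.
  specialize (IH (s ++ [x])). rewrite <- app_assoc in IH. simpl in IH.
  rewrite length_app in IH. simpl in IH. rewrite Nat.add_1_r in IH. exact IH.
Qed.

Lemma map_nth_seq : forall v, map (fun i => nth i v 0) (seq 0 (length v)) = v.
Proof. intros. exact (map_nth_seq_gen v []). Qed.

Lemma C_projs : forall n, Forall (Comp n) (map (fun i v => nth i v 0) (seq 0 n)).
Proof.
  intros n. apply Forall_forall. intros f Hf. apply in_map_iff in Hf as [i [Hi Hs]].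
  subst. apply in_seq in Hs. apply C_proj. lia.
Qed.

Lemma map_projs : forall v, map (fun h => h v) (map (fun i v => nth i v 0) (seq 0 (length v))) = v.
Proof. intros. rewrite map_map. apply map_nth_seq. Qed.

Lemma C_iterk : forall n (B K : list nat -> nat) (st : nat -> nat -> list nat -> nat),
  Comp n B -> Comp (S (S n)) (fun u => st (nth 0 u 0) (nth 1 u 0) (tl (tl u))) -> Comp n K ->
  Comp n (fun v => iterk (fun k a => st k a v) (B v) (K v)).
Proof.
  intros n B K st [pb Hb] [ps Hs] HK.
  assert (Comp (S n) (fun u => iterk (fun k a => st k a (tl u)) (B (tl u)) (nth 0 u 0))) as Hr.
  { exists (prec pb ps). intros u Hu. destruct u as [|k w]; [discriminate|]. simpl in Hu |- *.
    injection Hu; intros Hw. induction k; simpl.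
    - constructor. apply Hb; auto.
    - econstructor. apply IHk. apply (Hs (k :: _ :: w)). simpl. lia. }
  eapply comp_ext.
  apply (C_compose n (S n) _ (K :: map (fun i v => nth i v 0) (seq 0 n)) Hr).
  constructor; auto. apply C_projs. simpl. rewrite length_map, length_seq. auto.
  intros v Hv. simpl. subst n. rewrite map_projs. reflexivity.
Qed.

Lemma C_sub : forall n m F idx, Comp m F -> length idx = m -> Forall (fun i => i < n) idx ->
  Comp n (fun u => F (map (fun i => nth i u 0) idx)).
Proof.
  intros n m F idx HF Hl Hi.
  eapply comp_ext. apply (C_compose n m F (map (fun i u => nth i u 0) idx)); auto.
  - apply Forall_map. eapply Forall_impl; [|exact Hi]. intros. apply C_proj; auto.
  - rewrite length_map; auto.
  - intros. cbv beta. rewrite map_map. reflexivity.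
Qed.

Lemma map_seq_S : forall (f : nat -> nat) k n, map f (seq (S k) n) = map (fun i => f (S i)) (seq k n).
Proof. intros. rewrite <- seq_shift, map_map. reflexivity. Qed.

Lemma map_nth_seq_skip : forall u k, map (fun i => nth i u 0) (seq k (length u - k)) = skipn k u.
Proof.
  induction u as [|x u IH]; intros k.
  - destruct k; reflexivity.
  - destruct k.
    + simpl. f_equal. rewrite map_seq_S. simpl. pose proof (IH 0) as H0. simpl in H0.
      rewrite Nat.sub_0_r in H0. exact H0.
    + simpl length. replace (S (length u) - S k) with (length u - k) by lia.
      rewrite map_seq_S. simpl. apply IH.
Qed.

Lemma C_tl_lift : forall n (F : list nat -> nat), Comp n F ->
  Comp (S n) (fun u => F (tl u)).
Proof.
  intros n F H. eapply comp_ext. apply (C_sub (S n) n F (seq 1 n)); auto.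
  - apply length_seq.
  - apply Forall_forall. intros x Hx. apply in_seq in Hx. lia.
  - intros u Hu. cbv beta. f_equal. replace n with (length u - 1) by lia.
    rewrite map_nth_seq_skip. destruct u; simpl; auto.
Qed.

Lemma C_keep0_lift : forall n (F : list nat -> nat), Comp (S n) F ->
  Comp (S (S n)) (fun u => F (nth 0 u 0 :: tl (tl u))).
Proof.
  intros n F H. eapply comp_ext. apply (C_sub (S (S n)) (S n) F (0 :: seq 2 n)); auto.
  - simpl. rewrite length_seq. auto.
  - constructor. lia. apply Forall_forall. intros x Hx. apply in_seq in Hx. lia.
  - intros u Hu. cbv beta. f_equal. simpl. f_equal. replace n with (length u - 2) by lia.
    rewrite map_nth_seq_skip. destruct u as [|a [|b u]]; reflexivity.
Qed.

Lemma nth_tl : forall (u : list nat) i, nth i (tl u) 0 = nth (S i) u 0.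
Proof. destruct u; destruct i; reflexivity. Qed.

Lemma C_proj_tl : forall n i (F : list nat -> list nat),
  Comp n (fun u => nth (S i) (F u) 0) -> Comp n (fun u => nth i (tl (F u)) 0).
Proof. intros. eapply comp_ext; eauto. intros; rewrite nth_tl; auto. Qed.

Definition b2n (b : bool) : nat := if b then 1 else 0.

Class BC1 (g : nat -> bool) := bc1 : Comp 1 (fun u => b2n (g (nth 0 u 0))).
Class BC2 (g : nat -> nat -> bool) := bc2 : Comp 2 (fun u => b2n (g (nth 0 u 0) (nth 1 u 0))).
Class BC3 (g : nat -> nat -> nat -> bool) :=
  bc3 : Comp 3 (fun u => b2n (g (nth 0 u 0) (nth 1 u 0) (nth 2 u 0))).

Lemma C_bapp1 : forall g n a, BC1 g -> Comp n a -> Comp n (fun v => b2n (g (a v))).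
Proof. intros. apply (C_app1 (fun x => b2n (g x))); auto. Qed.
Lemma C_bapp2 : forall g n a b, BC2 g -> Comp n a -> Comp n b -> Comp n (fun v => b2n (g (a v) (b v))).
Proof. intros. apply (C_app2 (fun x y => b2n (g x y))); auto. Qed.
Lemma C_bapp3 : forall g n a b c, BC3 g -> Comp n a -> Comp n b -> Comp n c ->
  Comp n (fun v => b2n (g (a v) (b v) (c v))).
Proof. intros. apply (C_app3 (fun x y z => b2n (g x y z))); auto. Qed.

Ltac comp0 :=
  cbv beta;
  first [ assumption | lazymatch goal with
  | |- Comp _ (fun v => nth _ v 0) => apply C_proj; lia
  | |- Comp _ (fun v => nth _ (tl _) 0) => apply C_proj_tl; comp0
  | |- Comp _ (fun _ => ?k) => apply C_const
  | |- Comp _ (fun v => S (@?a v)) => apply (C_succ _ a); comp0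
  | |- Comp _ (fun v => iterk (fun k a => @?st k a v) (@?B v) (@?K v)) =>
      apply (C_iterk _ B K st); comp0
  | |- Comp _ (fun v => ?g (@?a v) (@?b v)) =>
      apply (C_app2 g _ a b); [solve [typeclasses eauto] | comp0 ..]
  | |- Comp _ (fun v => ?g (@?a v)) =>
      apply (C_app1 g _ a); [solve [typeclasses eauto] | comp0 ..]
  end ].

#[export] Instance C2_add : C2 Nat.add.
Proof.
  unfold C2. eapply comp_ext with (f := fun u => iterk (fun k a => S a) (nth 0 u 0) (nth 1 u 0)).
  comp0. intros v _. generalize (nth 1 v 0) (nth 0 v 0). induction n; simpl; intros; [lia|rewrite IHn; lia].
Qed.

#[export] Instance C2_mul : C2 Nat.mul.
Proof.
  unfold C2. eapply comp_ext with (f := fun u => iterk (fun k a => a + nth 0 u 0) 0 (nth 1 u 0)).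
  comp0. intros v _. generalize (nth 1 v 0) (nth 0 v 0). induction n; simpl; intros; [lia|rewrite IHn; lia].
Qed.

#[export] Instance C1_pred : C1 Nat.pred.
Proof.
  unfold C1. eapply comp_ext with (f := fun u => iterk (fun k a => k) 0 (nth 0 u 0)).
  comp0. intros v _. generalize (nth 0 v 0). destruct n; reflexivity.
Qed.

#[export] Instance C2_sub : C2 Nat.sub.
Proof.
  unfold C2. eapply comp_ext with (f := fun u => iterk (fun k a => Nat.pred a) (nth 0 u 0) (nth 1 u 0)).
  comp0. intros v _. generalize (nth 1 v 0) (nth 0 v 0). induction n; simpl; intros; [lia|rewrite IHn; lia].
Qed.

Lemma C_if : forall n (b : list nat -> bool) x y, Comp n (fun v => b2n (b v)) -> Comp n x -> Comp n y ->
  Comp n (fun v => if b v then x v else y v).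
Proof.
  intros. eapply comp_ext with (f := fun v => b2n (b v) * x v + (1 - b2n (b v)) * y v).
  comp0. intros v _. destruct (b v); simpl; lia.
Qed.

Lemma C_andb : forall n (a b : list nat -> bool), Comp n (fun v => b2n (a v)) -> Comp n (fun v => b2n (b v)) ->
  Comp n (fun v => b2n (a v && b v)).
Proof.
  intros. eapply comp_ext with (f := fun v => b2n (a v) * b2n (b v)).
  comp0. intros v _. destruct (a v), (b v); reflexivity.
Qed.

Lemma C_orb : forall n (a b : list nat -> bool), Comp n (fun v => b2n (a v)) -> Comp n (fun v => b2n (b v)) ->
  Comp n (fun v => b2n (a v || b v)).
Proof.
  intros. eapply comp_ext with (f := fun v => 1 - (1 - (b2n (a v) + b2n (b v)))).
  comp0. intros v _. destruct (a v), (b v); reflexivity.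
Qed.

Lemma C_negb : forall n (a : list nat -> bool), Comp n (fun v => b2n (a v)) ->
  Comp n (fun v => b2n (negb (a v))).
Proof.
  intros. eapply comp_ext with (f := fun v => 1 - b2n (a v)).
  comp0. intros v _. destruct (a v); reflexivity.
Qed.

#[export] Instance BC2_eqb : BC2 Nat.eqb.
Proof.
  unfold BC2. eapply comp_ext with (f := fun v => 1 - ((nth 0 v 0 - nth 1 v 0) + (nth 1 v 0 - nth 0 v 0))).
  comp0. intros v _. cbv beta. unfold b2n. destruct (Nat.eqb_spec (nth 0 v 0) (nth 1 v 0)); lia.
Qed.

#[export] Instance BC2_ltb : BC2 Nat.ltb.
Proof.
  unfold BC2. eapply comp_ext with (f := fun v => 1 - (1 - (nth 1 v 0 - nth 0 v 0))).
  comp0. intros v _. cbv beta. unfold b2n. destruct (Nat.ltb_spec (nth 0 v 0) (nth 1 v 0)); lia.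
Qed.

#[export] Instance BC2_leb : BC2 Nat.leb.
Proof.
  unfold BC2. eapply comp_ext with (f := fun v => 1 - (nth 0 v 0 - nth 1 v 0)).
  comp0. intros v _. cbv beta. unfold b2n. destruct (Nat.leb_spec (nth 0 v 0) (nth 1 v 0)); lia.
Qed.

Fixpoint ex_lt (n : nat) (P : nat -> bool) : bool :=
  match n with 0 => false | S k => ex_lt k P || P k end.
Fixpoint fa_lt (n : nat) (P : nat -> bool) : bool :=
  match n with 0 => true | S k => fa_lt k P && P k end.
Fixpoint cnt (n : nat) (P : nat -> bool) : nat :=
  match n with 0 => 0 | S k => cnt k P + b2n (P k) end.
Fixpoint bmin (n : nat) (P : nat -> bool) : nat :=
  match n with 0 => 0 | S k => if bmin k P <? k then bmin k P else if P k then k else S k end.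

Lemma C_body : forall n (P : nat -> list nat -> bool),
  Comp (S n) (fun u => b2n (P (nth 0 u 0) (tl u))) ->
  Comp (S (S n)) (fun u => b2n (P (nth 0 u 0) (tl (tl u)))).
Proof.
  intros n P H. apply C_keep0_lift in H. eapply comp_ext; [exact H|].
  intros; reflexivity.
Qed.

Lemma C_exlt : forall n B (P : nat -> list nat -> bool),
  Comp n B -> Comp (S n) (fun u => b2n (P (nth 0 u 0) (tl u))) ->
  Comp n (fun v => b2n (ex_lt (B v) (fun k => P k v))).
Proof.
  intros n B P HB HP. apply C_body in HP.
  eapply comp_ext with (f := fun v => iterk (fun k a => if P k v then 1 else a) 0 (B v)).
  - apply (C_iterk _ _ _ (fun k a v => if P k v then 1 else a)); [comp0| |auto].
    apply (C_if _ (fun u => P (nth 0 u 0) (tl (tl u)))); auto; comp0.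
  - intros v _. generalize (B v). induction n0; simpl; auto.
    rewrite IHn0. destruct (P n0 v), (ex_lt n0 (fun k => P k v)); reflexivity.
Qed.

Lemma C_falt : forall n B (P : nat -> list nat -> bool),
  Comp n B -> Comp (S n) (fun u => b2n (P (nth 0 u 0) (tl u))) ->
  Comp n (fun v => b2n (fa_lt (B v) (fun k => P k v))).
Proof.
  intros n B P HB HP. apply C_body in HP.
  eapply comp_ext with (f := fun v => iterk (fun k a => if P k v then a else 0) 1 (B v)).
  - apply (C_iterk _ _ _ (fun k a v => if P k v then a else 0)); [comp0| |auto].
    apply (C_if _ (fun u => P (nth 0 u 0) (tl (tl u)))); auto; comp0.
  - intros v _. generalize (B v). induction n0; simpl; auto.
    rewrite IHn0. destruct (P n0 v), (fa_lt n0 (fun k => P k v)); reflexivity.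
Qed.

Lemma C_cnt : forall n B (P : nat -> list nat -> bool),
  Comp n B -> Comp (S n) (fun u => b2n (P (nth 0 u 0) (tl u))) ->
  Comp n (fun v => cnt (B v) (fun k => P k v)).
Proof.
  intros n B P HB HP. apply C_body in HP.
  eapply comp_ext with (f := fun v => iterk (fun k a => a + b2n (P k v)) 0 (B v)).
  - apply (C_iterk _ _ _ (fun k a v => a + b2n (P k v))); [comp0| |auto].
    apply (C_app2 Nat.add _ (fun u => nth 1 u 0) (fun u => b2n (P (nth 0 u 0) (tl (tl u))))); auto.
    typeclasses eauto. comp0.
  - intros v _. generalize (B v). induction n0; simpl; auto.
Qed.

Lemma C_bmin : forall n B (P : nat -> list nat -> bool),
  Comp n B -> Comp (S n) (fun u => b2n (P (nth 0 u 0) (tl u))) ->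
  Comp n (fun v => bmin (B v) (fun k => P k v)).
Proof.
  intros n B P HB HP. apply C_body in HP.
  eapply comp_ext with (f := fun v => iterk (fun k a => if a <? k then a else if P k v then k else S k) 0 (B v)).
  - apply (C_iterk _ _ _ (fun k a v => if a <? k then a else if P k v then k else S k)); [comp0| |auto].
    apply (C_if _ (fun u => nth 1 u 0 <? nth 0 u 0)). apply (C_bapp2 Nat.ltb). typeclasses eauto. comp0. comp0. comp0.
    apply (C_if _ (fun u => P (nth 0 u 0) (tl (tl u)))); auto; comp0.
  - intros v _. generalize (B v). induction n0; simpl; auto. rewrite IHn0. reflexivity.
Qed.

Ltac comp :=
  cbv beta;
  first [ assumption | lazymatch goal with
  | |- Comp _ (fun v => nth _ v 0) => apply C_proj; lia
  | |- Comp _ (fun v => nth _ (tl _) 0) => apply C_proj_tl; comp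
  | |- Comp _ (fun _ => ?k) => apply C_const
  | |- Comp _ (fun v => S (@?a v)) => apply (C_succ _ a); comp
  | |- Comp _ (fun v => iterk (fun k a => @?st k a v) (@?B v) (@?K v)) =>
      apply (C_iterk _ B K st); comp
  | |- Comp _ (fun v => if @?b v then @?x v else @?y v) => apply (C_if _ b x y); comp
  | |- Comp _ (fun v => b2n (andb (@?a v) (@?b v))) => apply (C_andb _ a b); comp
  | |- Comp _ (fun v => b2n (orb (@?a v) (@?b v))) => apply (C_orb _ a b); comp
  | |- Comp _ (fun v => b2n (negb (@?a v))) => apply (C_negb _ a); comp
  | |- Comp _ (fun v => b2n (ex_lt (@?B v) (fun k => @?P k v))) => apply (C_exlt _ B P); comp
  | |- Comp _ (fun v => b2n (fa_lt (@?B v) (fun k => @?P k v))) => apply (C_falt _ B P); comp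
  | |- Comp _ (fun v => cnt (@?B v) (fun k => @?P k v)) => apply (C_cnt _ B P); comp
  | |- Comp _ (fun v => bmin (@?B v) (fun k => @?P k v)) => apply (C_bmin _ B P); comp
  | |- Comp _ (fun v => b2n (?g (@?a v) (@?b v) (@?c v))) =>
      apply (C_bapp3 g _ a b c); [solve [typeclasses eauto] | comp ..]
  | |- Comp _ (fun v => b2n (?g (@?a v) (@?b v))) =>
      apply (C_bapp2 g _ a b); [solve [typeclasses eauto] | comp ..]
  | |- Comp _ (fun v => b2n (?g (@?a v))) =>
      apply (C_bapp1 g _ a); [solve [typeclasses eauto] | comp ..]
  | |- Comp _ (fun v => ?g (@?a v) (@?b v) (@?c v) (@?d v)) =>
      apply (C_app4 g _ a b c d); [solve [typeclasses eauto] | comp ..]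
  | |- Comp _ (fun v => ?g (@?a v) (@?b v) (@?c v)) =>
      apply (C_app3 g _ a b c); [solve [typeclasses eauto] | comp ..]
  | |- Comp _ (fun v => ?g (@?a v) (@?b v)) =>
      apply (C_app2 g _ a b); [solve [typeclasses eauto] | comp ..]
  | |- Comp _ (fun v => ?g (@?a v)) =>
      apply (C_app1 g _ a); [solve [typeclasses eauto] | comp ..]
  end ].

#[export] Instance C1_tri : C1 tri.
Proof.
  unfold C1. eapply comp_ext with (f := fun u => iterk (fun k a => a + S k) 0 (nth 0 u 0)).
  comp. intros v _. generalize (nth 0 v 0). induction n; simpl; auto.
Qed.

#[export] Instance C2_cpair : C2 cpair.
Proof.
  unfold C2. eapply comp_ext with (f := fun u => tri (nth 0 u 0 + nth 1 u 0) + nth 1 u 0).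
  comp. intros v _. rewrite cpair_tri. reflexivity.
Qed.

Definition fstN (n : nat) : nat := bmin (S n) (fun x => ex_lt (S n) (fun y => cpair x y =? n)).
Definition sndN (n : nat) : nat := bmin (S n) (fun y => ex_lt (S n) (fun x => cpair x y =? n)).

#[export] Instance C1_fstN : C1 fstN.
Proof. unfold C1, fstN. comp. Qed.
#[export] Instance C1_sndN : C1 sndN.
Proof. unfold C1, sndN. comp. Qed.

Lemma ex_lt_spec : forall n P, ex_lt n P = true <-> exists k, k < n /\ P k = true.
Proof.
  induction n; simpl; intros P.
  - split; [discriminate|intros [k [H _]]; lia].
  - rewrite orb_true_iff, IHn. split.
    + intros [[k [H1 H2]]|H]; eauto.
    + intros [k [H1 H2]]. destruct (Nat.eq_dec k n); subst; auto. left; exists k; split; auto; lia.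
Qed.

Lemma fa_lt_spec : forall n P, fa_lt n P = true <-> forall k, k < n -> P k = true.
Proof.
  induction n; simpl; intros P.
  - split; auto; intros; lia.
  - rewrite andb_true_iff, IHn. split.
    + intros [H1 H2] k Hk. destruct (Nat.eq_dec k n); subst; auto. apply H1; lia.
    + intros H; split; auto.
Qed.

Lemma ex_lt_ext : forall n P Q, (forall k, k < n -> P k = Q k) -> ex_lt n P = ex_lt n Q.
Proof. induction n; simpl; intros P Q H; auto. rewrite (IHn P Q), H; auto. Qed.
Lemma fa_lt_ext : forall n P Q, (forall k, k < n -> P k = Q k) -> fa_lt n P = fa_lt n Q.
Proof. induction n; simpl; intros P Q H; auto. rewrite (IHn P Q), H; auto. Qed.
Lemma cnt_ext : forall n P Q, (forall k, k < n -> P k = Q k) -> cnt n P = cnt n Q.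
Proof. induction n; simpl; intros P Q H; auto. rewrite (IHn P Q), H; auto. Qed.

Lemma bmin_none : forall n P, (forall k, k < n -> P k = false) -> bmin n P = n.
Proof.
  induction n; simpl; intros; auto. rewrite IHn by auto. rewrite Nat.ltb_irrefl, H; auto.
Qed.

Lemma bmin_spec : forall n P m, m < n -> P m = true -> (forall k, k < m -> P k = false) -> bmin n P = m.
Proof.
  induction n; simpl; intros P m Hm HP Hk. lia.
  destruct (Nat.eq_dec m n).
  - subst. rewrite bmin_none by auto. rewrite Nat.ltb_irrefl, HP. auto.
  - rewrite (IHn P m) by (auto; lia). replace (m <? n) with true; auto.
    symmetry; apply Nat.ltb_lt; lia.
Qed.

Lemma fstN_cpair : forall x y, fstN (cpair x y) = x.
Proof.
  intros. unfold fstN. pose proof (cpair_ge x y). apply bmin_spec.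
  - lia.
  - apply ex_lt_spec. exists y. split. lia. apply Nat.eqb_refl.
  - intros k Hk. apply not_true_is_false. intros H1. apply ex_lt_spec in H1 as [y' [_ H1]].
    apply Nat.eqb_eq in H1. apply cpair_inj in H1. lia.
Qed.

Lemma sndN_cpair : forall x y, sndN (cpair x y) = y.
Proof.
  intros. unfold sndN. pose proof (cpair_ge x y). apply bmin_spec.
  - lia.
  - apply ex_lt_spec. exists x. split. lia. apply Nat.eqb_refl.
  - intros k Hk. apply not_true_is_false. intros H1. apply ex_lt_spec in H1 as [y' [_ H1]].
    apply Nat.eqb_eq in H1. apply cpair_inj in H1. lia.
Qed.

Lemma cpair_fst_snd : forall n, cpair (fstN n) (sndN n) = n.
Proof.
  intros. destruct (cpair_surj n) as [x [y H]]. subst. rewrite fstN_cpair, sndN_cpair. auto.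
Qed.

Definition hdN (c : nat) : nat := fstN (Nat.pred c).
Definition tlN (c : nat) : nat := sndN (Nat.pred c).
Definition dropN (k c : nat) : nat := iterk (fun _ a => tlN a) c k.
Definition nthN (k c : nat) : nat := hdN (dropN k c).
Definition lenN (c : nat) : nat := cnt c (fun k => negb (dropN k c =? 0)).

#[export] Instance C1_hdN : C1 hdN.
Proof. unfold C1, hdN. comp. Qed.
#[export] Instance C1_tlN : C1 tlN.
Proof. unfold C1, tlN. comp. Qed.
#[export] Instance C2_dropN : C2 dropN.
Proof. unfold C2, dropN. comp. Qed.
#[export] Instance C2_nthN : C2 nthN.
Proof. unfold C2, nthN. comp. Qed.
#[export] Instance C1_lenN : C1 lenN.
Proof. unfold C1, lenN. comp. Qed.

Lemma hdN_code : forall l, hdN (code_nats l) = hd 0 l.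
Proof. destruct l; simpl; unfold hdN; simpl. reflexivity. apply fstN_cpair. Qed.
Lemma hdN0 : hdN 0 = 0.
Proof. reflexivity. Qed.
Lemma tlN_code : forall l, tlN (code_nats l) = code_nats (tl l).
Proof. destruct l; simpl; unfold tlN; simpl. reflexivity. apply sndN_cpair. Qed.

Lemma dropN_code : forall k l, dropN k (code_nats l) = code_nats (skipn k l).
Proof.
  induction k; intros l. reflexivity.
  unfold dropN in *. simpl. rewrite IHk. rewrite tlN_code. f_equal.
  clear. revert l. induction k; destruct l; simpl; auto.
Qed.

Lemma nthN_code : forall k l, nthN k (code_nats l) = nth k l 0.
Proof.
  intros. unfold nthN. rewrite dropN_code, hdN_code. revert l; induction k; destruct l; simpl; auto.
Qed.

Lemma code_nats_ge : forall l, length l <= code_nats l.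
Proof. induction l; simpl; auto. pose proof (cpair_ge a (code_nats l)). lia. Qed.

Lemma lenN_code : forall l, lenN (code_nats l) = length l.
Proof.
  intros l. unfold lenN.
  assert (forall n, n <= code_nats l -> cnt n (fun k => negb (dropN k (code_nats l) =? 0)) = Nat.min n (length l)).
  { induction n; intros. reflexivity. cbn -[Nat.min dropN]. rewrite IHn by lia. rewrite dropN_code.
    destruct (le_lt_dec (length l) n).
    - rewrite skipn_all2 by auto. unfold b2n. cbn -[Nat.min]. lia.
    - destruct (skipn n l) eqn:E. apply (f_equal (@length nat)) in E. rewrite length_skipn in E. simpl in E. lia.
      unfold b2n. cbn -[Nat.min]. lia. }
  rewrite H. pose proof (code_nats_ge l). lia. auto.
Qed.

Definition jdg (k a b y : nat) : nat := cpair k (cpair a (cpair b y)).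
Definition vcons (x w : nat) : nat := S (cpair x w).
Definition tagE (e : nat) : nat := fstN e.
Definition fld (i e : nat) : nat := fstN (iterk (fun _ a => sndN a) (sndN e) i).

#[export] Instance C4_jdg : C4 jdg.
Proof. unfold C4, jdg. comp. Qed.
#[export] Instance C2_vcons : C2 vcons.
Proof. unfold C2, vcons. comp. Qed.
#[export] Instance C1_tagE : C1 tagE.
Proof. unfold C1, tagE. comp. Qed.
#[export] Instance C2_fld : C2 fld.
Proof. unfold C2, fld. comp. Qed.

Definition Je (e : nat) : nat :=
  if tagE e =? 0 then jdg 0 (cpair 0 0) (fld 0 e) 0 else
  if tagE e =? 1 then jdg 0 (cpair 1 0) (vcons (fld 0 e) (fld 1 e)) (S (fld 0 e)) else
  if tagE e =? 2 then jdg 0 (cpair 2 (fld 0 e)) (fld 1 e) (fld 2 e) else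
  if tagE e =? 3 then jdg 0 (cpair 3 (cpair (fld 0 e) (fld 1 e))) (fld 2 e) (fld 4 e) else
  if tagE e =? 4 then jdg 0 (cpair 4 (cpair (fld 0 e) (fld 1 e))) (vcons 0 (fld 2 e)) (fld 3 e) else
  if tagE e =? 5 then jdg 0 (cpair 4 (cpair (fld 0 e) (fld 1 e))) (vcons (S (fld 2 e)) (fld 3 e)) (fld 5 e) else
  if tagE e =? 6 then jdg 0 (cpair 5 (fld 0 e)) (fld 1 e) (fld 2 e) else
  if tagE e =? 7 then jdg 1 0 (fld 0 e) 0 else
  if tagE e =? 8 then jdg 1 (S (cpair (fld 0 e) (fld 1 e))) (fld 2 e) (S (cpair (fld 3 e) (fld 4 e))) else
  if tagE e =? 9 then jdg 2 0 (vcons (fld 0 e) (fld 1 e)) (fld 0 e) else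
  if tagE e =? 10 then jdg 2 (S (fld 0 e)) (vcons (fld 1 e) (fld 2 e)) (fld 3 e) else
  if tagE e =? 11 then jdg 3 (fld 0 e) (fld 1 e) 0 else
  if tagE e =? 12 then jdg 3 (fld 0 e) (fld 1 e) (S (fld 2 e)) else
  if tagE e =? 13 then jdg 4 (cpair 0 0) 0 0 else
  if tagE e =? 14 then jdg 4 (cpair 1 0) 0 0 else
  if tagE e =? 15 then jdg 4 (cpair 2 (fld 0 e)) 0 0 else
  if tagE e =? 16 then jdg 4 (cpair 3 (cpair (fld 0 e) (fld 1 e))) 0 0 else
  if tagE e =? 17 then jdg 4 (cpair 4 (cpair (fld 0 e) (fld 1 e))) 0 0 else
  if tagE e =? 18 then jdg 4 (cpair 5 (fld 0 e)) 0 0 else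
  if tagE e =? 19 then jdg 5 0 0 0 else
  if tagE e =? 20 then jdg 5 (S (cpair (fld 0 e) (fld 1 e))) 0 0 else 0.

Definition P1 (e : nat) : nat :=
  if tagE e =? 2 then jdg 2 (fld 0 e) (fld 1 e) (fld 2 e) else
  if tagE e =? 3 then jdg 1 (fld 1 e) (fld 2 e) (fld 3 e) else
  if tagE e =? 4 then jdg 0 (fld 0 e) (fld 2 e) (fld 3 e) else
  if tagE e =? 5 then jdg 0 (cpair 4 (cpair (fld 0 e) (fld 1 e))) (vcons (fld 2 e) (fld 3 e)) (fld 4 e) else
  if tagE e =? 6 then jdg 0 (fld 0 e) (vcons (fld 2 e) (fld 1 e)) 0 else
  if tagE e =? 8 then jdg 0 (fld 0 e) (fld 2 e) (fld 3 e) else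
  if tagE e =? 10 then jdg 2 (fld 0 e) (fld 2 e) (fld 3 e) else
  if tagE e =? 11 then jdg 4 (fld 0 e) 0 0 else
  if tagE e =? 12 then jdg 3 (fld 0 e) (fld 1 e) (fld 2 e) else
  if tagE e =? 16 then jdg 4 (fld 0 e) 0 0 else
  if tagE e =? 17 then jdg 4 (fld 0 e) 0 0 else
  if tagE e =? 18 then jdg 4 (fld 0 e) 0 0 else
  if tagE e =? 20 then jdg 4 (fld 0 e) 0 0 else 0.

Definition P2 (e : nat) : nat :=
  if tagE e =? 3 then jdg 0 (fld 0 e) (fld 3 e) (fld 4 e) else
  if tagE e =? 4 then jdg 4 (fld 1 e) 0 0 else
  if tagE e =? 5 then jdg 0 (fld 1 e) (vcons (fld 2 e) (vcons (fld 4 e) (fld 3 e))) (fld 5 e) else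
  if tagE e =? 6 then jdg 3 (fld 0 e) (fld 1 e) (fld 2 e) else
  if tagE e =? 8 then jdg 1 (fld 1 e) (fld 2 e) (fld 4 e) else
  if tagE e =? 12 then jdg 0 (fld 0 e) (vcons (fld 2 e) (fld 1 e)) (S (fld 3 e)) else
  if tagE e =? 16 then jdg 5 (fld 1 e) 0 0 else
  if tagE e =? 17 then jdg 4 (fld 1 e) 0 0 else
  if tagE e =? 20 then jdg 5 (fld 1 e) 0 0 else 0.

#[export] Instance C1_Je : C1 Je.
Proof. unfold C1, Je. comp. Qed.
#[export] Instance C1_P1 : C1 P1.
Proof. unfold C1, P1. comp. Qed.
#[export] Instance C1_P2 : C1 P2.
Proof. unfold C1, P2. comp. Qed.

Definition memz (j r : nat) : bool := (j =? 0) || ex_lt (lenN r) (fun m => Je (nthN m r) =? j).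
Definition okE (e r : nat) : bool := (tagE e <=? 20) && memz (P1 e) r && memz (P2 e) r.
Definition validN (c : nat) : bool := fa_lt (lenN c) (fun k => okE (nthN k c) (dropN (S k) c)).
Definition isTgt (j e x : nat) : bool :=
  (fstN j =? 0) && (fstN (sndN j) =? e) && (fstN (sndN (sndN j)) =? vcons x 0).
Definition Tchk (e x s : nat) : bool :=
  ex_lt (S s) (fun c => validN c && ex_lt (lenN c) (fun k => isTgt (Je (nthN k c)) e x)).

#[export] Instance BC2_memz : BC2 memz.
Proof. unfold BC2, memz. comp. Qed.
#[export] Instance BC2_okE : BC2 okE.
Proof. unfold BC2, okE. comp. Qed.
#[export] Instance BC1_validN : BC1 validN.
Proof. unfold BC1, validN. comp. Qed.
#[export] Instance BC3_isTgt : BC3 isTgt.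
Proof. unfold BC3, isTgt. comp. Qed.
#[export] Instance BC3_Tchk : BC3 Tchk.
Proof. unfold BC3, Tchk. comp. Qed.

Definition mkE (t : nat) (ds : list nat) : nat := cpair t (fold_right cpair 0 ds).

Lemma fstN0 : fstN 0 = 0.
Proof. exact (fstN_cpair 0 0). Qed.
Lemma sndN0 : sndN 0 = 0.
Proof. exact (sndN_cpair 0 0). Qed.

Lemma tag_mkE : forall t ds, tagE (mkE t ds) = t.
Proof. intros. apply fstN_cpair. Qed.

Lemma fld_mkE : forall i t ds, fld i (mkE t ds) = nth i ds 0.
Proof.
  intros. unfold fld, mkE. rewrite sndN_cpair.
  assert (iterk (fun _ a => sndN a) (fold_right cpair 0 ds) i = fold_right cpair 0 (skipn i ds)).
  { induction i; simpl; auto. rewrite IHi. clear IHi. revert ds. induction i; destruct ds; simpl; auto.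
    all: try apply sndN0; try apply sndN_cpair. }
  rewrite H. clear H. revert ds. induction i; destruct ds; simpl; auto; try apply fstN0.
  all: try apply fstN_cpair.
Qed.

Definition mz (j : nat) (R : list nat) : Prop := j = 0 \/ In j (map Je R).
Definition okL (e : nat) (R : list nat) : Prop := tagE e <= 20 /\ mz (P1 e) R /\ mz (P2 e) R.
Fixpoint validL (L : list nat) : Prop :=
  match L with [] => True | e :: R => okL e R /\ validL R end.

Lemma in_map_nth : forall (f : nat -> nat) R x, In x (map f R) <-> exists m, m < length R /\ f (nth m R 0) = x.
Proof.
  intros. rewrite in_map_iff. split.
  - intros [y [H1 H2]]. apply In_nth with (d := 0) in H2 as [m [Hm H2]]. exists m. subst; auto.
  - intros [m [Hm H]]. exists (nth m R 0). split; auto. apply nth_In; auto.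
Qed.

Lemma memz_code : forall j R, memz j (code_nats R) = true <-> mz j R.
Proof.
  intros. unfold memz, mz. rewrite orb_true_iff, Nat.eqb_eq, lenN_code.
  rewrite (ex_lt_ext _ _ (fun m => Je (nth m R 0) =? j)) by (intros; rewrite nthN_code; auto).
  rewrite ex_lt_spec, in_map_nth. split; intros [H|H]; auto; right;
  destruct H as [m [Hm H]]; exists m; split; auto; apply Nat.eqb_eq in H || apply Nat.eqb_eq; auto.
Qed.

Lemma okE_code : forall e R, okE e (code_nats R) = true <-> okL e R.
Proof.
  intros. unfold okE, okL. rewrite !andb_true_iff, !memz_code, Nat.leb_le. tauto.
Qed.

Lemma fa_lt_shift : forall n P, fa_lt (S n) P = P 0 && fa_lt n (fun k => P (S k)).
Proof.
  induction n; intros; simpl. destruct (P 0); auto.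
  simpl in IHn. rewrite IHn. destruct (P 0); simpl; auto.
Qed.

Lemma validN_code : forall L, validN (code_nats L) = true <-> validL L.
Proof.
  intros L. unfold validN. rewrite lenN_code.
  rewrite (fa_lt_ext _ _ (fun k => okE (nth k L 0) (code_nats (skipn (S k) L))))
    by (intros; rewrite nthN_code, dropN_code; auto).
  induction L as [|e R IH]. simpl. split; auto.
  cbn [length]. rewrite fa_lt_shift, andb_true_iff. cbn [nth skipn validL]. rewrite okE_code, IH. tauto.
Qed.

Lemma mz_app : forall j R R', mz j R -> mz j (R ++ R').
Proof. unfold mz. intros j R R' [H|H]; auto. right. rewrite map_app. apply in_or_app; auto. Qed.
Lemma mz_app2 : forall j R R', mz j R' -> mz j (R ++ R').
Proof. unfold mz. intros j R R' [H|H]; auto. right. rewrite map_app. apply in_or_app; auto. Qed.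

Lemma validL_app : forall L1 L2, validL L1 -> validL L2 -> validL (L1 ++ L2).
Proof.
  induction L1; simpl; auto. intros L2 [[H1 [H2 H3]] H4] H5. repeat split; auto using mz_app.
Qed.

Definition sem4 (k a b y : nat) : Prop :=
  match k with
  | 0 => exists p v, code p = a /\ code_nats v = b /\ eval p v y
  | 1 => exists gs v ys, codel gs = a /\ code_nats v = b /\ code_nats ys = y /\ evals gs v ys
  | 2 => exists v, code_nats v = b /\ a < length v /\ nth a v 0 = y
  | 3 => exists p v, code p = a /\ code_nats v = b /\ forall m, m < y -> exists k, eval p (m :: v) (S k)
  | 4 => exists p, code p = a
  | 5 => exists gs, codel gs = a
  | _ => True
  end.

Definition semJ (j : nat) : Prop :=
  sem4 (fstN j) (fstN (sndN j)) (fstN (sndN (sndN j))) (sndN (sndN (sndN j))).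

Lemma semJ_jdg : forall k a b y, semJ (jdg k a b y) <-> sem4 k a b y.
Proof. intros. unfold semJ, jdg. repeat rewrite ?fstN_cpair, ?sndN_cpair. tauto. Qed.

Lemma semJ0 : semJ 0.
Proof.
  change 0 with (jdg 0 0 0 0). apply semJ_jdg. exists pzero, []. repeat split. constructor.
Qed.

Lemma cn_cons : forall v x b, code_nats v = vcons x b -> exists w, v = x :: w /\ code_nats w = b.
Proof.
  intros [|y w] x b H; simpl in H; try discriminate. injection H; intros H'.
  apply cpair_inj in H' as [H1 H2]. subst. eauto.
Qed.

Lemma code_prec_inv : forall p a b, code p = cpair 4 (cpair a b) ->
  exists f g, p = prec f g /\ code f = a /\ code g = b.
Proof.
  intros [| | | f gs | f g | f] a b H; try rewrite code_comp in H; simpl in H;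
  apply cpair_inj in H as [H1 H2]; try discriminate.
  apply cpair_inj in H2 as [H2 H3]. eauto.
Qed.

Ltac norm := repeat (subst; match goal with
  | H : code ?p = code ?q |- _ => apply code_inj in H
  | H : codel ?p = codel ?q |- _ => apply codel_inj in H
  | H : code_nats ?a = code_nats ?b |- _ => apply code_nats_inj in H
  | H : code_nats ?v = vcons _ _ |- _ => let w := fresh "w" in apply cn_cons in H as [w [? ?]]
  | H : code ?p = cpair 4 (cpair _ _) |- _ =>
      let f := fresh "f" in let g := fresh "g" in apply code_prec_inv in H as [f [g [? [? ?]]]]
  end); subst.

Lemma rule_sound : forall e R, okL e R -> (forall j, In j (map Je R) -> semJ j) -> semJ (Je e).
Proof.
  intros e R [Ht [H1 H2]] HR.
  assert (S1 : semJ (P1 e)) by (destruct H1 as [H1|H1]; [rewrite H1; apply semJ0|auto]).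
  assert (S2 : semJ (P2 e)) by (destruct H2 as [H2|H2]; [rewrite H2; apply semJ0|auto]).
  clear H1 H2 HR. unfold Je, P1, P2 in *.
  set (d0 := fld 0 e) in *. set (d1 := fld 1 e) in *. set (d2 := fld 2 e) in *.
  set (d3 := fld 3 e) in *. set (d4 := fld 4 e) in *. set (d5 := fld 5 e) in *.
  clearbody d0 d1 d2 d3 d4 d5. remember (tagE e) as t. clear Heqt e.
  destruct t as [|[|[|[|[|[|[|[|[|[|[|[|[|[|[|[|[|[|[|[|[|t]]]]]]]]]]]]]]]]]]]]]; [.. | lia]; simpl in *; rewrite ?semJ_jdg in *; simpl in *.
  - destruct (code_nats_surj d0) as [v Hv]. exists pzero, v. repeat split; auto. constructor.
  - destruct (code_nats_surj d1) as [w Hw]. exists psucc, (d0 :: w). simpl. rewrite Hw.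
    repeat split; auto. constructor.
  - destruct S1 as [v [Hv [Hl Hn]]]. exists (pproj d0), v. repeat split; auto. subst. constructor; auto.
  - destruct S1 as [gs [v [ys [Hg [Hv [Hy Hev]]]]]]. destruct S2 as [p [ys' [Hp [Hy' Hev']]]].
    norm. exists (pcomp p gs), v. rewrite code_comp. repeat split; auto. econstructor; eauto.
  - destruct S1 as [p [w [Hp [Hw Hev]]]]. destruct S2 as [g Hg].
    exists (prec p g), (0 :: w). simpl. subst. repeat split; auto. constructor; auto.
  - destruct S1 as [p1 [v1 [Hp1 [Hv1 Hev1]]]]. destruct S2 as [p2 [v2 [Hp2 [Hv2 Hev2]]]].
    norm. eexists (prec _ _), (S d2 :: _). simpl. repeat split; eauto. econstructor; eauto.
  - destruct S1 as [p1 [v1 [Hp1 [Hv1 Hev1]]]]. destruct S2 as [p2 [v2 [Hp2 [Hv2 Hev2]]]].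
    norm. eexists (pmu _), _. repeat split; eauto. constructor; eauto.
  - destruct (code_nats_surj d0) as [v Hv]. exists [], v, []. repeat split; auto. constructor.
  - destruct S1 as [p [v [Hp [Hv Hev]]]]. destruct S2 as [gs [v' [ys [Hg [Hv' [Hy Hev']]]]]].
    norm. exists (p :: gs), v, (d3 :: ys). simpl. repeat split; auto. constructor; auto.
  - destruct (code_nats_surj d1) as [w Hw]. exists (d0 :: w). simpl. rewrite Hw.
    repeat split; auto. lia.
  - destruct S1 as [w [Hw [Hl Hn]]]. exists (d1 :: w). simpl. rewrite Hw. repeat split; auto. lia.
  - destruct S1 as [p Hp]. destruct (code_nats_surj d1) as [v Hv]. exists p, v.
    repeat split; auto. intros; lia.
  - destruct S1 as [p [v [Hp [Hv Hm]]]]. destruct S2 as [p' [v' [Hp' [Hv' Hev]]]].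
    norm. eexists _, _. repeat split; eauto. intros m Hm'. destruct (Nat.eq_dec m d2).
    subst; eauto. apply Hm; lia.
  - exists pzero; reflexivity.
  - exists psucc; reflexivity.
  - exists (pproj d0); reflexivity.
  - destruct S1 as [p Hp]. destruct S2 as [gs Hg]. exists (pcomp p gs). rewrite code_comp. subst; auto.
  - destruct S1 as [p Hp]. destruct S2 as [g Hg]. exists (prec p g). subst; auto.
  - destruct S1 as [p Hp]. exists (pmu p). subst; auto.
  - exists []. reflexivity.
  - destruct S1 as [p Hp]. destruct S2 as [gs Hg]. exists (p :: gs). subst; auto.
Qed.

Lemma valid_sound : forall L, validL L -> forall j, In j (map Je L) -> semJ j.
Proof.
  induction L as [|e R IH]; simpl; intros HV j Hj. contradiction.
  destruct HV as [Ho HV]. destruct Hj as [Hj|Hj]; auto. subst. apply (rule_sound e R); auto.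
Qed.

Arguments cpair : simpl never.
Arguments jdg : simpl never.

Lemma validL_concat : forall Ls, Forall validL Ls -> validL (concat Ls).
Proof. induction 1; simpl; auto. apply validL_app; auto. Qed.

Lemma mk_cert : forall e Ls J, Forall validL Ls -> okL e (concat Ls) -> Je e = J ->
  exists L, validL L /\ In J (map Je L).
Proof.
  intros e Ls J HF Ho HJ. exists (e :: concat Ls). simpl. split; auto.
  split; auto. apply validL_concat; auto.
Qed.

Lemma in_cat : forall J L Ls, In J (map Je L) -> In L Ls -> In J (map Je (concat Ls)).
Proof.
  intros J L Ls H1 H2. rewrite concat_map. apply in_concat. exists (map Je L). split; auto.
  apply in_map; auto.
Qed.

Ltac mkErw t ds := rewrite ?(tag_mkE t ds), ?(fld_mkE 0 t ds), ?(fld_mkE 1 t ds), ?(fld_mkE 2 t ds),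
  ?(fld_mkE 3 t ds), ?(fld_mkE 4 t ds), ?(fld_mkE 5 t ds); cbn [nth Nat.eqb].

Ltac certif t ds Ls :=
  apply (mk_cert (mkE t ds) Ls); [ repeat constructor; assumption
  | unfold okL, mz, P1, P2; mkErw t ds;
    repeat split; try lia;
    lazymatch goal with |- 0 = 0 \/ _ => left; reflexivity | _ => right; (eapply in_cat; [eassumption| simpl; tauto]) end
  | unfold Je; mkErw t ds; try reflexivity ].

Lemma compl_prog : forall p, exists L, validL L /\ In (jdg 4 (code p) 0 0) (map Je L).
Proof.
  fix IH 1. intros p. destruct p as [| | i | f gs | f g | f].
  - certif 13 (@nil nat) (@nil (list nat)).
  - certif 14 (@nil nat) (@nil (list nat)).
  - certif 15 [i] (@nil (list nat)).
  - destruct (IH f) as [L1 [V1 I1]].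
    assert (exists L, validL L /\ In (jdg 5 (codel gs) 0 0) (map Je L)) as [L2 [V2 I2]].
    { induction gs as [|g gs IHg].
      - certif 19 (@nil nat) (@nil (list nat)).
      - destruct (IH g) as [L3 [V3 I3]]. destruct IHg as [L4 [V4 I4]].
        certif 20 [code g; codel gs] [L3; L4]. }
    rewrite code_comp. certif 16 [code f; codel gs] [L1; L2].
  - destruct (IH f) as [L1 [V1 I1]]. destruct (IH g) as [L2 [V2 I2]].
    certif 17 [code f; code g] [L1; L2].
  - destruct (IH f) as [L1 [V1 I1]]. certif 18 [code f] [L1].
Qed.

Lemma compl_nth : forall v i, i < length v ->
  exists L, validL L /\ In (jdg 2 i (code_nats v) (nth i v 0)) (map Je L).
Proof.
  induction v as [|x v IH]; simpl; intros i Hi. lia.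
  destruct i.
  - certif 9 [x; code_nats v] (@nil (list nat)).
  - destruct (IH i) as [L1 [V1 I1]]. lia.
    certif 10 [i; x; code_nats v; nth i v 0] [L1].
Qed.

Lemma compl_muok : forall p v n,
  (forall m, m < n -> exists k L, validL L /\ In (jdg 0 (code p) (code_nats (m :: v)) (S k)) (map Je L)) ->
  exists L, validL L /\ In (jdg 3 (code p) (code_nats v) n) (map Je L).
Proof.
  intros p v n. induction n; intros H.
  - destruct (compl_prog p) as [L1 [V1 I1]]. certif 11 [code p; code_nats v] [L1].
  - destruct IHn as [L1 [V1 I1]]. intros; apply H; lia.
    destruct (H n) as [k [L2 [V2 I2]]]. lia.
    certif 12 [code p; code_nats v; n; k] [L1; L2].
Qed.

Lemma compl_eval : forall p v y, eval p v y ->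
  exists L, validL L /\ In (jdg 0 (code p) (code_nats v) y) (map Je L)
with compl_evals : forall gs v ys, evals gs v ys ->
  exists L, validL L /\ In (jdg 1 (codel gs) (code_nats v) (code_nats ys)) (map Je L).
Proof.
  - intros p v y H. destruct H.
    + certif 0 [code_nats v] (@nil (list nat)).
    + certif 1 [x; code_nats v] (@nil (list nat)).
    + destruct (compl_nth v i H) as [L1 [V1 I1]].
      certif 2 [i; code_nats v; nth i v 0] [L1].
    + destruct (compl_evals _ _ _ H) as [L1 [V1 I1]]. destruct (compl_eval _ _ _ H0) as [L2 [V2 I2]].
      rewrite code_comp. certif 3 [code f; codel gs; code_nats v; code_nats ys; y] [L1; L2].
    + destruct (compl_eval _ _ _ H) as [L1 [V1 I1]]. destruct (compl_prog g) as [L2 [V2 I2]].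
      certif 4 [code f; code g; code_nats v; y] [L1; L2].
    + destruct (compl_eval _ _ _ H) as [L1 [V1 I1]]. destruct (compl_eval _ _ _ H0) as [L2 [V2 I2]].
      certif 5 [code f; code g; n; code_nats v; y; z] [L1; L2].
    + destruct (compl_eval _ _ _ H) as [L1 [V1 I1]].
      assert (Hm : forall m, m < n -> exists k L, validL L /\
        In (jdg 0 (code f) (code_nats (m :: v)) (S k)) (map Je L)).
      { intros m Hm. destruct (H0 m Hm) as [k Hk]. destruct (compl_eval _ _ _ Hk) as [L [V I]]. eauto. }
      destruct (compl_muok f v n Hm) as [L2 [V2 I2]].
      certif 6 [code f; code_nats v; n] [L1; L2].
  - intros gs v ys H. destruct H.
    + certif 7 [code_nats v] (@nil (list nat)).
    + destruct (compl_eval _ _ _ H) as [L1 [V1 I1]]. destruct (compl_evals _ _ _ H0) as [L2 [V2 I2]].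
      certif 8 [code g; codel gs; code_nats v; y; code_nats ys] [L1; L2].
Qed.

Lemma W_T : forall e x, W e x <-> exists s, Tchk e x s = true.
Proof.
  intros e x. split.
  - intros [p [Hp [y Hy]]]. destruct (compl_eval _ _ _ Hy) as [L [V I]].
    exists (code_nats L). unfold Tchk. apply ex_lt_spec. exists (code_nats L). split. lia.
    apply andb_true_iff. split. apply validN_code; auto.
    apply ex_lt_spec. rewrite lenN_code. apply in_map_nth in I as [m [Hm I]].
    exists m. split; auto. rewrite nthN_code, I. unfold isTgt, jdg.
    repeat rewrite ?fstN_cpair, ?sndN_cpair. subst. rewrite !Nat.eqb_refl. reflexivity.
  - intros [s Hs]. unfold Tchk in Hs. apply ex_lt_spec in Hs as [c [_ Hc]].
    apply andb_true_iff in Hc as [Hv Hk]. destruct (code_nats_surj c) as [L HL]. subst c.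
    apply validN_code in Hv. rewrite lenN_code in Hk. apply ex_lt_spec in Hk as [m [Hm Hk]].
    rewrite nthN_code in Hk.
    assert (HS : semJ (Je (nth m L 0))).
    { apply (valid_sound L Hv). apply in_map_nth. eauto. }
    set (j := Je (nth m L 0)) in *. unfold isTgt in Hk. rewrite !andb_true_iff, !Nat.eqb_eq in Hk.
    destruct Hk as [[H1 H2] H3]. unfold semJ in HS. rewrite H1, H2, H3 in HS. simpl in HS.
    destruct HS as [p [v [Hp [Hv' Hev]]]]. apply cn_cons in Hv' as [w [? Hw]]. subst.
    change 0 with (code_nats []) in Hw. apply code_nats_inj in Hw. subst.
    exists p. split; auto. eauto.
Qed.

Lemma ex_lt_mono : forall n m P, n <= m -> ex_lt n P = true -> ex_lt m P = true.
Proof.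
  intros. apply ex_lt_spec in H0 as [k [Hk H0]]. apply ex_lt_spec. exists k. split; auto. lia.
Qed.

Lemma T_mono : forall e x s s', s <= s' -> Tchk e x s = true -> Tchk e x s' = true.
Proof. intros. unfold Tchk in *. apply (ex_lt_mono (S s)); auto. lia. Qed.

Definition amin (e s : nat) : nat :=
  if bmin (S s) (fun x => Tchk e x s) <=? s then S (bmin (S s) (fun x => Tchk e x s)) else 0.

#[export] Instance C2_amin : C2 amin.
Proof. unfold C2, amin. comp. Qed.

Definition aval (a : nat) : ext := match a with 0 => PInf | S m => Fin m end.

Lemma least_ex : forall (P : nat -> Prop), (exists k, P k) -> exists m, P m /\ forall k, k < m -> ~ P k.
Proof.
  intros P [k Hk]. induction k as [k IH] using (well_founded_induction lt_wf).
  destruct (classic (exists j, j < k /\ P j)) as [[j [Hj Pj]]|Hn].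
  - apply (IH j Hj Pj).
  - exists k. split; auto. intros j Hj Pj. apply Hn; eauto.
Qed.

Lemma amin_stab : forall e, exists a s0, (forall t, s0 <= t -> amin e t = a) /\
  (forall v, minW e v <-> v = aval a).
Proof.
  intros e. destruct (classic (exists k, W e k)) as [Hex|Hn].
  - destruct (least_ex _ Hex) as [m [Hm Hlt]].
    destruct (proj1 (W_T e m) Hm) as [s1 Hs1].
    exists (S m), (Nat.max s1 m). split.
    + intros t Ht. unfold amin.
      rewrite (bmin_spec (S t) _ m); [| lia | apply (T_mono _ _ s1); auto; lia |].
      * replace (m <=? t) with true; auto. symmetry; apply Nat.leb_le; lia.
      * intros k Hk. apply not_true_is_false. intros HT.
        apply (Hlt k Hk). apply W_T. eauto.
    + intros [| m' |]; simpl; split; intros H; try discriminate; try contradiction.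
      * destruct H as [H1 H2]. f_equal. specialize (H2 m Hm).
        destruct (lt_eq_lt_dec m' m) as [[Hl|He]|Hl]; auto. exfalso; apply (Hlt m' Hl H1). lia.
      * injection H; intros; subst. split; auto. intros k Hk.
        destruct (le_lt_dec m k); auto. exfalso; apply (Hlt k); auto.
      * exfalso. apply (H m Hm).
  - exists 0, 0. split.
    + intros t _. unfold amin. rewrite bmin_none.
      * replace (S t <=? t) with false; auto. symmetry; apply Nat.leb_gt; lia.
      * intros k _. apply not_true_is_false. intros HT. apply Hn. exists k. apply W_T. eauto.
    + intros [| m' |]; simpl; split; intros H; try discriminate; try contradiction; auto.
      * destruct H as [H1 _]. exfalso; apply Hn; eauto.
      * intros k Hk. apply Hn; eauto.
Qed.

Definition lc (ch : nat -> bool) (s : nat) : nat := iterk (fun t a => if ch t then S t else a) 0 s.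

Lemma lc_le : forall ch s, lc ch s <= s.
Proof. intros ch s. induction s; unfold lc in *; simpl; auto. destruct (ch s); lia. Qed.

Lemma lc_mono : forall ch s t, s <= t -> lc ch s <= lc ch t.
Proof.
  intros ch s t H. induction H; auto. unfold lc in *; simpl. destruct (ch m); auto.
  pose proof (lc_le ch m). unfold lc in H0. lia.
Qed.

Lemma lc_idem : forall ch s, lc ch (lc ch s) = lc ch s.
Proof.
  intros ch s. induction s; auto. unfold lc in *; simpl. destruct (ch s) eqn:E; auto.
  simpl. rewrite E. auto.
Qed.

Lemma lc_stab : forall ch s0, (forall t, s0 <= t -> ch t = false) ->
  exists L, (forall t, L <= t -> lc ch t = L) /\ (forall t, t < L -> lc ch t < L) /\
            (forall t, L <= t -> ch t = false).
Proof.
  intros ch s0 H. exists (lc ch s0).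
  assert (A1 : forall t, lc ch s0 <= t -> lc ch t = lc ch s0).
  { intros t Ht. destruct (le_lt_dec s0 t).
    - clear Ht. induction l; auto. unfold lc at 1; simpl. rewrite H by lia. exact IHl.
    - apply Nat.le_antisymm. apply lc_mono; lia. rewrite <- (lc_idem ch s0) at 1. apply lc_mono; auto. }
  split; [|split]; auto.
  - intros t Ht. pose proof (lc_le ch t). lia.
  - intros t Ht. destruct (ch t) eqn:E; auto. pose proof (A1 (S t)) as HA.
    specialize (HA ltac:(lia)). unfold lc at 1 in HA. simpl in HA. rewrite E in HA. lia.
Qed.

Lemma const_after : forall (ch : nat -> bool) (h : nat -> nat) L,
  (forall t, L <= t -> ch t = false) -> (forall t, ch t = false -> h (S t) = h t) ->
  forall t, L <= t -> h t = h L.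
Proof.
  intros ch h L H1 H2 t Ht. induction Ht; auto. rewrite H2; auto.
Qed.

Lemma halt_prog : forall n F, Comp (S n) F ->
  exists p, forall w, length w = n -> ((exists y, eval p w y) <-> exists k, F (k :: w) = 0).
Proof.
  intros n F [q Hq]. exists (pmu q). intros w Hw. split.
  - intros [y Hy]. inversion Hy; subst. exists y.
    eapply eval_det. apply Hq. simpl; lia. auto.
  - intros Hk. destruct (least_ex _ Hk) as [m [Hm Hlt]]. exists m. constructor.
    + rewrite <- Hm. apply Hq. simpl; lia.
    + intros j Hj. specialize (Hlt j Hj). destruct (F (j :: w)) eqn:E. contradiction.
      exists n0. rewrite <- E. apply Hq. simpl; lia.
Qed.

Definition cc (k : nat) : nat := iterk (fun _ a => cpair 3 (cpair (cpair 1 0) (S (cpair a 0)))) (cpair 0 0) k.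
Lemma cc_code : forall k, cc k = code (constp k).
Proof. induction k; auto. unfold cc in *. simpl. rewrite IHk. reflexivity. Qed.

Definition hN (a b i : nat) : nat :=
  cpair 3 (cpair a (S (cpair (cc b) (S (cpair (cc i) (S (cpair (cpair 2 0) 0))))))).

#[export] Instance C1_cc : C1 cc.
Proof. unfold C1, cc. comp. Qed.
#[export] Instance C3_hN : C3 hN.
Proof. unfold C3, hN. comp. Qed.

Lemma hN_code : forall P b i, hN (code P) b i = code (pcomp P [constp b; constp i; pproj 0]).
Proof. intros. rewrite code_comp. unfold hN. rewrite !cc_code. reflexivity. Qed.

Lemma spec_evals : forall b i x, evals [constp b; constp i; pproj 0] [x] [b; i; x].
Proof.
  intros. repeat constructor; try apply constp_eval.
Qed.

Lemma spec_eval : forall P b i x y, eval (pcomp P [constp b; constp i; pproj 0]) [x] y <-> eval P [b; i; x] y.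
Proof.
  intros. split; intros H.
  - inversion H; subst. pose proof (evals_det _ _ _ H2 _ (spec_evals b i x)). subst. auto.
  - econstructor; [apply spec_evals|exact H].
Qed.

Lemma W_hN : forall P b i x, W (hN (code P) b i) x <-> exists y, eval P [b; i; x] y.
Proof.
  intros. rewrite hN_code. split.
  - intros [p [Hp [y Hy]]]. apply code_inj in Hp. subst. apply spec_eval in Hy. eauto.
  - intros [y Hy]. exists (pcomp P [constp b; constp i; pproj 0]). split; auto. exists y.
    apply spec_eval; auto.
Qed.

Lemma maxW_unique : forall e v1 v2, maxW e v1 -> maxW e v2 -> v1 = v2.
Proof.
  intros e [|m1|] [|m2|]; simpl; intros H1 H2; auto.
  - destruct H2 as [H2 _]. exfalso; eapply H1; eauto.
  - destruct (H2 0) as [k [_ Hk]]. exfalso; eapply H1; eauto.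
  - destruct H1 as [H1 _]. exfalso; eapply H2; eauto.
  - destruct H1 as [H1 H1']. destruct H2 as [H2 H2']. f_equal.
    specialize (H1' _ H2). specialize (H2' _ H1). lia.
  - destruct H1 as [H1 H1']. destruct (H2 (S m1)) as [k [Hk Hk']]. specialize (H1' _ Hk'). lia.
  - destruct (H1 0) as [k [_ Hk]]. exfalso; eapply H2; eauto.
  - destruct H2 as [H2 H2']. destruct (H1 (S m2)) as [k [Hk Hk']]. specialize (H2' _ Hk'). lia.
Qed.

Lemma maxW_fin : forall e m, W e m -> (forall k, W e k -> k <= m) -> maxW e (Fin m).
Proof. intros. simpl. auto. Qed.

Lemma E_max_fin : forall e1 e2 m1 m2, maxW e1 (Fin m1) -> maxW e2 (Fin m2) -> (E_max e1 e2 <-> m1 = m2).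
Proof.
  intros e1 e2 m1 m2 H1 H2. unfold E_max. split.
  - intros [v [Hv1 Hv2]]. pose proof (maxW_unique _ _ _ H1 Hv1). pose proof (maxW_unique _ _ _ H2 Hv2).
    subst. congruence.
  - intros; subst. eauto.
Qed.

Lemma E_min_aval : forall e1 e2 a1 a2, (forall v, minW e1 v <-> v = aval a1) ->
  (forall v, minW e2 v <-> v = aval a2) -> (E_min e1 e2 <-> a1 = a2).
Proof.
  intros e1 e2 a1 a2 H1 H2. unfold E_min. split.
  - intros [v [Hv1 Hv2]]. apply H1 in Hv1. apply H2 in Hv2. subst.
    destruct a1, a2; simpl in Hv2; congruence.
  - intros; subst. exists (aval a2). rewrite H1, H2. auto.
Qed.

Lemma comp2_C2 : forall f, computable2 f -> C2 f.
Proof.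
  intros f [p Hp]. exists p. intros v Hv. destruct v as [|x [|y [|]]]; simpl in Hv; try lia. apply Hp.
Qed.

Definition chg (u v t : nat) : bool :=
  negb (amin u (S t) =? amin u t) || negb (amin v (S t) =? amin v t).

Definition val1 (f g : nat -> nat -> nat) (a i s : nat) : nat :=
  2 * lc (chg (f (hN a a 0) (hN a a 1)) (g (hN a a 0) (hN a a 1))) s +
  (if (i =? 0) && (amin (f (hN a a 0) (hN a a 1)) s =? amin (g (hN a a 0) (hN a a 1)) s) then 1 else 0).

#[export] Instance BC3_chg : BC3 chg.
Proof. unfold BC3, chg. comp. Qed.

Lemma b2n_negb_eqb : forall x y, b2n (negb (x =? y)) = 0 <-> x = y.
Proof. intros. unfold b2n. destruct (Nat.eqb_spec x y); simpl; split; intros; congruence. Qed.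

Lemma stab2 : forall u v, exists au av L,
  (forall t, L <= t -> amin u t = au /\ amin v t = av) /\
  (forall t, L <= t -> lc (chg u v) t = L) /\ (forall t, t < L -> lc (chg u v) t < L) /\
  (forall w, minW u w <-> w = aval au) /\ (forall w, minW v w <-> w = aval av).
Proof.
  intros u v. destruct (amin_stab u) as [au [su [Hu Hu']]]. destruct (amin_stab v) as [av [sv [Hv Hv']]].
  destruct (lc_stab (chg u v) (Nat.max su sv)) as [L [H1 [H2 H3]]].
  { intros t Ht. unfold chg. rewrite (Hu t), (Hu (S t)), (Hv t), (Hv (S t)) by lia.
    rewrite !Nat.eqb_refl. reflexivity. }
  assert (Cu : forall t', chg u v t' = false -> amin u (S t') = amin u t').
  { intros t' Hc. unfold chg in Hc. apply orb_false_iff in Hc as [Hc _]. apply negb_false_iff, Nat.eqb_eq in Hc. auto. }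
  assert (Cv : forall t', chg u v t' = false -> amin v (S t') = amin v t').
  { intros t' Hc. unfold chg in Hc. apply orb_false_iff in Hc as [_ Hc]. apply negb_false_iff, Nat.eqb_eq in Hc. auto. }
  exists au, av, L. split; [|split; [auto|split; [auto|split; auto]]].
  intros t Ht. split.
  - rewrite (const_after _ (amin u) L H3 Cu t Ht).
    rewrite <- (const_after _ (amin u) L H3 Cu (Nat.max L su)) by lia. apply Hu; lia.
  - rewrite (const_after _ (amin v) L H3 Cv t Ht).
    rewrite <- (const_after _ (amin v) L H3 Cv (Nat.max L sv)) by lia. apply Hv; lia.
Qed.

Theorem part1 : ~ red2 E_max E_min.
Proof.
  intros [f [g [Cf [Cg Hiff]]]]. apply comp2_C2 in Cf. apply comp2_C2 in Cg.
  assert (HC : Comp 4 (fun u => b2n (negb (nth 3 u 0 =? val1 f g (nth 1 u 0) (nth 2 u 0) (nth 0 u 0))))).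
  { unfold val1, lc. comp. }
  destruct (halt_prog 3 _ HC) as [R HR].
  set (a := code R).
  assert (HW : forall i x, W (hN a a i) x <-> exists s, x = val1 f g a i s).
  { intros i x. unfold a. rewrite W_hN. rewrite (HR [code R; i; x]) by reflexivity. simpl.
    split; intros [k Hk]; exists k. apply b2n_negb_eqb; auto. apply b2n_negb_eqb; auto. }
  set (e0 := hN a a 0). set (e1 := hN a a 1).
  set (u := f e0 e1). set (v := g e0 e1).
  destruct (stab2 u v) as [au [av [L [Hst [HL1 [HL2 [Hu Hv]]]]]]].
  assert (Hval : forall i t, L <= t -> val1 f g a i t = 2 * L + (if (i =? 0) && (au =? av) then 1 else 0)).
  { intros i t Ht. unfold val1. fold e0 e1. fold u v. rewrite (HL1 t Ht).
    destruct (Hst t Ht) as [-> ->]. reflexivity. }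
  assert (Hsmall : forall i t, t < L -> val1 f g a i t < 2 * L).
  { intros i t Ht. unfold val1. fold e0 e1. fold u v. pose proof (HL2 t Ht).
    destruct (_ && _); lia. }
  set (b := if au =? av then 1 else 0).
  assert (M0 : maxW e0 (Fin (2 * L + b))).
  { split. { apply HW. exists L. rewrite Hval by auto. reflexivity. }
    intros k Hk. apply HW in Hk as [t ->]. destruct (le_lt_dec L t).
    { rewrite Hval by auto. reflexivity. } pose proof (Hsmall 0 t l). lia. }
  assert (M1 : maxW e1 (Fin (2 * L))).
  { split. { apply HW. exists L. rewrite Hval by auto. simpl. lia. }
    intros k Hk. apply HW in Hk as [t ->]. destruct (le_lt_dec L t).
    { rewrite Hval by auto. simpl. lia. } pose proof (Hsmall 1 t l). lia. }
  pose proof (E_max_fin _ _ _ _ M0 M1) as HM.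
  pose proof (E_min_aval _ _ _ _ Hu Hv) as Hm.
  specialize (Hiff e0 e1). fold u v in Hiff.
  unfold b in *. destruct (Nat.eqb_spec au av).
  - assert (E_min u v) by (apply Hm; auto). apply Hiff in H. apply HM in H. lia.
  - assert (E_max e0 e1) by (apply HM; lia). apply Hiff in H. apply Hm in H. contradiction.
Qed.

Definition ltopt (a b : nat) : bool := negb (a =? 0) && ((b =? 0) || (a <? b)).
Definition chgL (c t : nat) : bool :=
  ex_lt (lenN c) (fun j => negb (amin (nthN j c) (S t) =? amin (nthN j c) t)).
Definition rank (c i s : nat) : nat :=
  cnt (lenN c) (fun j => ltopt (amin (nthN j c) s) (amin (nthN i c) s)).
Definition val2 (c i s : nat) : nat := lc (chgL c) s * lenN c + rank c i s.

#[export] Instance BC2_ltopt : BC2 ltopt.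
Proof. unfold BC2, ltopt. comp. Qed.
#[export] Instance BC2_chgL : BC2 chgL.
Proof. unfold BC2, chgL. comp. Qed.
#[export] Instance C3_rank : C3 rank.
Proof. unfold C3, rank. comp. Qed.
#[export] Instance C3_val2 : C3 val2.
Proof. unfold C3, val2, lc. comp. Qed.

Lemma ltopt_irr : forall a, ltopt a a = false.
Proof. intros. unfold ltopt. destruct (a =? 0) eqn:E; simpl; auto. rewrite Nat.ltb_irrefl. auto. Qed.

Lemma ltopt_trans : forall a b d, ltopt a b = true -> ltopt b d = true -> ltopt a d = true.
Proof.
  unfold ltopt. intros a b d H1 H2. rewrite !andb_true_iff, !orb_true_iff, !negb_true_iff, !Nat.eqb_eq, !Nat.eqb_neq, !Nat.ltb_lt in *.
  destruct H1 as [H1 [H1'|H1']], H2 as [H2 [H2'|H2']]; try lia; split; auto; right; lia.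
Qed.

Lemma ltopt_total : forall a b, a <> b -> ltopt a b = true \/ ltopt b a = true.
Proof.
  unfold ltopt. intros a b H. rewrite !andb_true_iff, !orb_true_iff, !negb_true_iff, !Nat.eqb_eq, !Nat.eqb_neq, !Nat.ltb_lt.
  destruct (Nat.eq_dec a 0), (Nat.eq_dec b 0), (lt_dec a b); first [left; lia | right; lia].
Qed.

Lemma cnt_mono : forall n P Q, (forall k, k < n -> P k = true -> Q k = true) -> cnt n P <= cnt n Q.
Proof.
  induction n; simpl; intros; auto. specialize (IHn P Q). unfold b2n.
  destruct (P n) eqn:E. rewrite H; auto. assert (cnt n P <= cnt n Q) by (apply IHn; auto). lia.
  assert (cnt n P <= cnt n Q) by (apply IHn; auto). destruct (Q n); lia.
Qed.

Lemma cnt_strict : forall n P Q, (forall k, k < n -> P k = true -> Q k = true) ->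
  (exists k, k < n /\ P k = false /\ Q k = true) -> cnt n P < cnt n Q.
Proof.
  induction n; simpl; intros P Q H [k [Hk [H1 H2]]]. lia.
  unfold b2n. destruct (Nat.eq_dec k n).
  - subst. rewrite H1, H2. assert (cnt n P <= cnt n Q) by (apply cnt_mono; auto). lia.
  - assert (cnt n P < cnt n Q) by (apply IHn; eauto; exists k; repeat split; auto; lia).
    destruct (P n) eqn:E. rewrite H; auto. lia. destruct (Q n); lia.
Qed.

Lemma cnt_true : forall n, cnt n (fun _ => true) = n.
Proof. induction n; simpl; auto. rewrite IHn. unfold b2n. lia. Qed.

Lemma cnt_lt_n : forall n P i, i < n -> P i = false -> cnt n P < n.
Proof.
  intros. rewrite <- (cnt_true n) at 2. apply cnt_strict; auto. exists i; auto.
Qed.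

Lemma rank_inj : forall n (A : nat -> nat) i j, i < n -> j < n ->
  (cnt n (fun k => ltopt (A k) (A i)) = cnt n (fun k => ltopt (A k) (A j)) <-> A i = A j).
Proof.
  intros n A i j Hi Hj. split.
  - intros H. destruct (Nat.eq_dec (A i) (A j)); auto. exfalso.
    destruct (ltopt_total _ _ n0) as [Hl|Hl].
    + assert (cnt n (fun k => ltopt (A k) (A i)) < cnt n (fun k => ltopt (A k) (A j))); [|lia].
      apply cnt_strict. intros k _ Hk. eapply ltopt_trans; eauto.
      exists i. split; auto. split; auto. apply ltopt_irr.
    + assert (cnt n (fun k => ltopt (A k) (A j)) < cnt n (fun k => ltopt (A k) (A i))); [|lia].
      apply cnt_strict. intros k _ Hk. eapply ltopt_trans; eauto.
      exists j. split; auto. split; auto. apply ltopt_irr.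
  - intros H. rewrite H. auto.
Qed.

Lemma stab_fin : forall (es : nat -> nat) n, exists S0, forall j, j < n -> forall t, S0 <= t ->
  amin (es j) t = amin (es j) S0.
Proof.
  intros es n. induction n.
  - exists 0. intros; lia.
  - destruct IHn as [S0 H]. destruct (amin_stab (es n)) as [a [s [Ha _]]].
    exists (Nat.max S0 s). intros j Hj t Ht. destruct (Nat.eq_dec j n).
    + subst. rewrite (Ha t), (Ha (Nat.max S0 s)); lia.
    + rewrite (H j ltac:(lia) t), (H j ltac:(lia) (Nat.max S0 s)); lia.
Qed.

Lemma stabL : forall c, exists (A : nat -> nat) L,
  (forall j, j < lenN c -> forall t, L <= t -> amin (nthN j c) t = A j) /\
  (forall t, L <= t -> lc (chgL c) t = L) /\ (forall t, t < L -> lc (chgL c) t < L) /\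
  (forall j, j < lenN c -> forall w, minW (nthN j c) w <-> w = aval (A j)).
Proof.
  intros c. destruct (stab_fin (fun j => nthN j c) (lenN c)) as [S0 HS].
  destruct (lc_stab (chgL c) S0) as [L [H1 [H2 H3]]].
  { intros t Ht. unfold chgL. apply not_true_is_false. intros Hx. apply ex_lt_spec in Hx as [j [Hj Hx]].
    rewrite (HS j Hj t), (HS j Hj (S t)) in Hx by lia. rewrite Nat.eqb_refl in Hx. discriminate. }
  exists (fun j => amin (nthN j c) S0), L.
  assert (C : forall j, j < lenN c -> forall t, chgL c t = false -> amin (nthN j c) (S t) = amin (nthN j c) t).
  { intros j Hj t Hc. unfold chgL in Hc. destruct (amin (nthN j c) (S t) =? amin (nthN j c) t) eqn:E.
    apply Nat.eqb_eq; auto. exfalso. assert (ex_lt (lenN c) (fun j => negb (amin (nthN j c) (S t) =? amin (nthN j c) t)) = true).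
    apply ex_lt_spec. exists j. rewrite E. auto. congruence. }
  split; [|split; [auto|split; [auto|]]].
  - intros j Hj t Ht. rewrite (const_after _ (amin (nthN j c)) L H3 (C j Hj) t Ht).
    rewrite <- (const_after _ (amin (nthN j c)) L H3 (C j Hj) (Nat.max L S0)) by lia. apply HS; lia.
  - intros j Hj w. destruct (amin_stab (nthN j c)) as [a [s [Ha Ha']]]. rewrite Ha'.
    rewrite <- (HS j Hj (Nat.max S0 s)) by lia. rewrite Ha by lia. tauto.
Qed.

Lemma build_code : forall (F : nat -> nat) n k, k <= n ->
  iterk (fun k acc => vcons (F (n - S k)) acc) 0 k = code_nats (map F (seq (n - k) k)).
Proof.
  intros F n k. induction k; intros H. reflexivity.
  simpl. rewrite IHk by lia. unfold vcons. simpl.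
  replace (S (n - S k)) with (n - k) by lia. reflexivity.
Qed.

Theorem part2 : red_fin E_min E_max.
Proof.
  assert (HC : Comp 4 (fun u => b2n (negb (nth 3 u 0 =? val2 (nth 1 u 0) (nth 2 u 0) (nth 0 u 0))))).
  { comp. }
  destruct (halt_prog 3 _ HC) as [Q HQ].
  set (aQ := code Q).
  assert (HW : forall c i x, W (hN aQ c i) x <-> exists s, x = val2 c i s).
  { intros c i x. unfold aQ. rewrite W_hN. rewrite (HQ [c; i; x]) by reflexivity. simpl.
    split; intros [k Hk]; exists k. apply b2n_negb_eqb; auto. apply b2n_negb_eqb; auto. }
  exists (fun l => map (fun i => hN aQ (code_nats l) i) (seq 0 (length l))). split.
  - assert (HG : Comp 1 (fun u => iterk (fun k acc => vcons (hN aQ (nth 0 u 0) (lenN (nth 0 u 0) - S k)) acc) 0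
                      (lenN (nth 0 u 0)))) by comp.
    destruct HG as [p Hp]. exists p. intros l. specialize (Hp [code_nats l] eq_refl). simpl in Hp.
    rewrite lenN_code in Hp. rewrite build_code in Hp by lia. rewrite Nat.sub_diag in Hp. exact Hp.
  - intros l. rewrite length_map, length_seq. split; auto.
    intros i j Hij Hj.
    assert (Hn : forall k, k < length l -> nth k (map (fun i => hN aQ (code_nats l) i) (seq 0 (length l))) 0 =
                                   hN aQ (code_nats l) k).
    { intros k Hk. rewrite nth_indep with (d' := hN aQ (code_nats l) 0) by (rewrite length_map, length_seq; auto).
      rewrite map_nth, seq_nth by auto. reflexivity. }
    rewrite !Hn by lia.
    set (c := code_nats l).
    destruct (stabL c) as [A [L [HA [HL1 [HL2 Hm]]]]].
    assert (Hlen : lenN c = length l) by apply lenN_code.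
    set (n := length l) in *.
    assert (Hr : forall k t, k < n -> L <= t -> rank c k t = cnt n (fun j => ltopt (A j) (A k))).
    { intros k t Hk Ht. unfold rank. rewrite Hlen. apply cnt_ext. intros j' Hj'.
      rewrite !HA by lia. reflexivity. }
    assert (Hrn : forall k t, k < n -> rank c k t < n).
    { intros k t Hk. unfold rank. rewrite Hlen. apply (cnt_lt_n _ _ k Hk). apply ltopt_irr. }
    assert (Hmax : forall k, k < n -> maxW (hN aQ c k) (Fin (L * n + cnt n (fun j => ltopt (A j) (A k))))).
    { intros k Hk. split.
      - apply HW. exists L. unfold val2. rewrite HL1, Hlen, Hr by lia. reflexivity.
      - intros x Hx. apply HW in Hx as [t ->]. unfold val2. rewrite Hlen.
        destruct (le_lt_dec L t).
        + rewrite HL1, Hr by lia. lia.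
        + pose proof (HL2 t l0). pose proof (Hrn k t Hk).
          assert (lc (chgL c) t * n <= (L - 1) * n) by (apply Nat.mul_le_mono_r; lia).
          assert ((L - 1) * n + n = L * n) by (destruct L; [lia|simpl; rewrite Nat.sub_0_r; lia]). lia. }
    rewrite (E_max_fin _ _ _ _ (Hmax i ltac:(lia)) (Hmax j ltac:(lia))).
    assert (Hi : nth i l 0 = nthN i c) by (unfold c; rewrite nthN_code; auto).
    assert (Hj' : nth j l 0 = nthN j c) by (unfold c; rewrite nthN_code; auto).
    rewrite Hi, Hj'. rewrite (E_min_aval _ _ _ _ (Hm i ltac:(lia)) (Hm j ltac:(lia))).
    rewrite <- (rank_inj n A i j) by lia. lia.
Qed.

Theorem proposition4p1 : ~ red2 E_max E_min /\ red_fin E_min E_max.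
Proof. split. apply part1. apply part2. Qed.
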